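(* Let $\boldsymbol{a},\boldsymbol{b},\boldsymbol{c}\in\mathbb{R}^3$ be pairwise distinct points carrying vorticity vectors $\boldsymbol{\omega}(\boldsymbol{a}),\boldsymbol{\omega}(\boldsymbol{b}),\boldsymbol{\omega}(\boldsymbol{c})\in\mathbb{R}^3$. With $D$ and $F_{\boldsymbol{\omega}}$ as defined in the context, \[D(\boldsymbol{a},\boldsymbol{b},\boldsymbol{c})+D(\boldsymbol{c},\boldsymbol{b},\boldsymbol{a})=(\boldsymbol{\omega}(\boldsymbol{b})\cdot\nabla_{\boldsymbol{b}})\big[F_{\boldsymbol{\omega}}(\boldsymbol{a},\boldsymbol{b},\boldsymbol{c})+F_{\boldsymbol{\omega}}(\boldsymbol{c},\boldsymbol{b},\boldsymbol{a})\big],\] where on the right the directional derivative in direction $\boldsymbol{\omega}(\boldsymbol{b})$ is taken with respect to the position $\boldsymbol{b}$, with $\boldsymbol{a},\boldsymbol{c},\boldsymbol{\omega}(\boldsymbol{a}),\boldsymbol{\omega}(\boldsymbol{c})$ held fixed.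
   Context: Interaction energy: for vorticity vectors $\boldsymbol{\beta},\boldsymbol{\gamma}_0$ at distinct points $\boldsymbol{b},\boldsymbol{c}$, \[I(\boldsymbol{\beta},\boldsymbol{\gamma}_0,\boldsymbol{c}-\boldsymbol{b})=\frac{1}{16\pi\|\boldsymbol{c}-\boldsymbol{b}\|}\Big[\boldsymbol{\beta}\cdot\boldsymbol{\gamma}_0+\frac{(\boldsymbol{\beta}\cdot(\boldsymbol{c}-\boldsymbol{b}))(\boldsymbol{\gamma}_0\cdot(\boldsymbol{c}-\boldsymbol{b}))}{\|\boldsymbol{c}-\boldsymbol{b}\|^2}\Big].\] The velocity induced at position $\boldsymbol{b}$ by the vorticity at $\boldsymbol{a}$ is $\boldsymbol{v}_{\boldsymbol{a}}(\boldsymbol{b})=\frac{1}{4\pi}\frac{\boldsymbol{\omega}(\boldsymbol{a})\times(\boldsymbol{b}-\boldsymbol{a})}{\|\boldsymbol{a}-\boldsymbol{b}\|^3}$ (Biot–Savart); under the vorticity form of the 3D Euler equations it moves $\boldsymbol{b}$ at rate $\boldsymbol{v}_{\boldsymbol{a}}(\boldsymbol{b})$ and changes the vorticity at $\boldsymbol{b}$ at rate $(\boldsymbol{\omega}(\boldsymbol{b})\cdot\nabla_{\boldsymbol{b}})\boldsymbol{v}_{\boldsymbol{a}}(\boldsymbol{b})$. The effect of $\boldsymbol{a}$'s induced velocity on $\boldsymbol{b}$ on the interaction energy between $\boldsymbol{b}$ and $\boldsymbol{c}$ is \[D(\boldsymbol{a},\boldsymbol{b},\boldsymbol{c})=\nabla_{\boldsymbol{b}}I(\boldsymbol{\beta},\boldsymbol{\omega}(\boldsymbol{c}),\boldsymbol{c}-\boldsymbol{b})\big|_{\boldsymbol{\beta}=\boldsymbol{\omega}(\boldsymbol{b})}\cdot\boldsymbol{v}_{\boldsymbol{a}}(\boldsymbol{b})+\nabla_{\boldsymbol{\beta}}I(\boldsymbol{\beta},\boldsymbol{\omega}(\boldsymbol{c}),\boldsymbol{c}-\boldsymbol{b})\big|_{\boldsymbol{\beta}=\boldsymbol{\omega}(\boldsymbol{b})}\cdot\big((\boldsymbol{\omega}(\boldsymbol{b})\cdot\nabla_{\boldsymbol{b}})\boldsymbol{v}_{\boldsymbol{a}}(\boldsymbol{b})\big),\]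 with the position gradient in the first term taken holding the vorticity argument $\boldsymbol{\beta}$ fixed. The interaction energy flow is \[F_{\boldsymbol{\omega}}(\boldsymbol{a},\boldsymbol{b},\boldsymbol{c})=\frac{1}{64\pi^2}\left[\frac{((\boldsymbol{a}-\boldsymbol{b})\times\boldsymbol{\omega}(\boldsymbol{a}))\cdot\boldsymbol{\omega}(\boldsymbol{c})}{\|\boldsymbol{a}-\boldsymbol{b}\|^3\,\|\boldsymbol{c}-\boldsymbol{b}\|}+\frac{\big(((\boldsymbol{b}-\boldsymbol{a})\times(\boldsymbol{b}-\boldsymbol{c}))\cdot\boldsymbol{\omega}(\boldsymbol{a})\big)\big((\boldsymbol{b}-\boldsymbol{c})\cdot\boldsymbol{\omega}(\boldsymbol{c})\big)}{\|\boldsymbol{a}-\boldsymbol{b}\|^3\,\|\boldsymbol{c}-\boldsymbol{b}\|^3}\right].\] *)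

(* Defs.v *)
From Stdlib Require Import Reals.
From Coquelicot Require Import Coquelicot.
Open Scope R_scope.

Record V3 := mkV { vx : R; vy : R; vz : R }.

Definition vadd (u v : V3) : V3 := mkV (vx u + vx v) (vy u + vy v) (vz u + vz v).
Definition vsub (u v : V3) : V3 := mkV (vx u - vx v) (vy u - vy v) (vz u - vz v).
Definition vscale (k : R) (u : V3) : V3 := mkV (k * vx u) (k * vy u) (k * vz u).
Definition dot (u v : V3) : R := vx u * vx v + vy u * vy v + vz u * vz v.
Definition cross (u v : V3) : V3 :=
  mkV (vy u * vz v - vz u * vy v)
      (vz u * vx v - vx u * vz v)
      (vx u * vy v - vy u * vx v).
Definition vnorm (u : V3) : R := sqrt (dot u u).

Definition e1 : V3 := mkV 1 0 0.
Definition e2 : V3 := mkV 0 1 0.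
Definition e3 : V3 := mkV 0 0 1.

Definition partial (f : V3 -> R) (x e : V3) : R :=
  Derive (fun t => f (vadd x (vscale t e))) 0.

Definition grad (f : V3 -> R) (x : V3) : V3 :=
  mkV (partial f x e1) (partial f x e2) (partial f x e3).

Definition conv_deriv (w : V3) (G : V3 -> V3) (x : V3) : V3 :=
  mkV (dot w (grad (fun y => vx (G y)) x))
      (dot w (grad (fun y => vy (G y)) x))
      (dot w (grad (fun y => vz (G y)) x)).

(* Interaction energy I(beta, gamma0, r) with r = c - b *)
Definition Ienergy (beta gamma0 r : V3) : R :=
  / (16 * PI * vnorm r) *
  (dot beta gamma0 + (dot beta r * dot gamma0 r) / (vnorm r ^ 2)).

(* Biot--Savart velocity induced at b by vorticity wa located at a *)
Definition vel (wa a b : V3) : V3 :=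
  vscale (/ (4 * PI) * / (vnorm (vsub a b) ^ 3)) (cross wa (vsub b a)).

Definition Dterm (omega : V3 -> V3) (a b c : V3) : R :=
  dot (grad (fun b' => Ienergy (omega b) (omega c) (vsub c b')) b) (vel (omega a) a b)
  + dot (grad (fun beta => Ienergy beta (omega c) (vsub c b)) (omega b))
        (conv_deriv (omega b) (fun b' => vel (omega a) a b') b).

(* Interaction energy flow F_omega(a,b,c); only omega(a), omega(c) enter *)
Definition Fflow (wa wc a b c : V3) : R :=
  / (64 * PI ^ 2) *
  ( dot (cross (vsub a b) wa) wc / (vnorm (vsub a b) ^ 3 * vnorm (vsub c b))
  + (dot (cross (vsub b a) (vsub b c)) wa * dot (vsub b c) wc)
      / (vnorm (vsub a b) ^ 3 * vnorm (vsub c b) ^ 3)).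

(* Main.v *)
Require Import Defs.
From Stdlib Require Import Reals Lra.
From Coquelicot Require Import Coquelicot.
Open Scope R_scope.

Lemma sumsq_pos (x y z : R) : ~ (x = 0 /\ y = 0 /\ z = 0) -> 0 < x * x + y * y + z * z.
Proof.
  intros H. destruct (Req_dec x 0) as [->|Hx].
  - destruct (Req_dec y 0) as [->|Hy].
    + destruct (Req_dec z 0) as [->|Hz]. { exfalso; tauto. }
      assert (0 < z * z) by (apply Rsqr_pos_lt; exact Hz). nra.
    + assert (0 < y * y) by (apply Rsqr_pos_lt; exact Hy). nra.
  - assert (0 < x * x) by (apply Rsqr_pos_lt; exact Hx). nra.
Qed.

Ltac nz := repeat first [ apply Rmult_integral_contrapositive_currified | apply pow_nonzero | apply Rinv_neq_0_compat ]; try lra.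

Ltac sides := rewrite ?Rmult_0_l, ?Rmult_0_r, ?Rplus_0_r, ?Rplus_0_l, ?Ropp_0;
  repeat split; first [ assumption | nz ].

Ltac doD := match goal with |- context [Derive ?f 0] =>
  erewrite (is_derive_unique f 0 _); [ | auto_derive; [ sides | reflexivity ] ] end.

Theorem proposition3 (omega : V3 -> V3) (a b c : V3)
  (hab : a <> b) (hbc : b <> c) (hac : a <> c) :
  Dterm omega a b c + Dterm omega c b a =
  dot (omega b)
      (grad (fun b' => Fflow (omega a) (omega c) a b' c
                       + Fflow (omega c) (omega a) c b' a) b).
Proof.
  unfold Dterm.
  destruct (omega a) as [wa1 wa2 wa3].
  destruct (omega b) as [wb1 wb2 wb3].
  destruct (omega c) as [wc1 wc2 wc3].
  destruct a as [a1 a2 a3], b as [b1 b2 b3], c as [c1 c2 c3].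
  assert (HQa : 0 < (a1 + - b1) * (a1 + - b1) + (a2 + - b2) * (a2 + - b2) + (a3 + - b3) * (a3 + - b3)).
  { apply sumsq_pos. intros [? [? ?]]. apply hab. f_equal; lra. }
  assert (HQc : 0 < (c1 + - b1) * (c1 + - b1) + (c2 + - b2) * (c2 + - b2) + (c3 + - b3) * (c3 + - b3)).
  { apply sumsq_pos. intros [? [? ?]]. apply hbc. f_equal; lra. }
  pose proof (sqrt_lt_R0 _ HQa) as Hp. pose proof (sqrt_lt_R0 _ HQc) as Hq.
  pose proof PI_RGT_0 as HPI. unfold PI in HPI.
  unfold Fflow, conv_deriv, grad, partial, Ienergy, vel, vnorm, dot, cross, vsub, vadd, vscale, e1, e2, e3; cbn [vx vy vz].
  unfold Rminus. unfold PI.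
  repeat doD.
  rewrite ?Rmult_0_l, ?Rmult_0_r, ?Rplus_0_r, ?Rplus_0_l, ?Ropp_0.
  all: set (p := sqrt ((a1 + - b1) * (a1 + - b1) + (a2 + - b2) * (a2 + - b2) + (a3 + - b3) * (a3 + - b3))) in *.
  all: set (q := sqrt ((c1 + - b1) * (c1 + - b1) + (c2 + - b2) * (c2 + - b2) + (c3 + - b3) * (c3 + - b3))) in *.
  clearbody p q.
  field; repeat split; nz.
Qed.
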